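(* $\mathbf{T}^{\nabla\bullet}$ is sound and strongly complete with respect to the class of reflexive frames: for every set $\Gamma\cup\{\phi\}\subseteq\mathcal{L}(\nabla,\bullet)$, $\Gamma\vdash_{\mathbf{T}^{\nabla\bullet}}\phi$ iff for every Kripke model $\mathcal{M}$ with reflexive accessibility relation and every state $s$, $\mathcal{M},s\vDash\Gamma$ implies $\mathcal{M},s\vDash\phi$.
   Context: $\mathcal{L}(\nabla,\bullet)$: $\phi::=p\mid\neg\phi\mid\phi\land\phi\mid\nabla\phi\mid\bullet\phi$ over a nonempty set $\mathbf{P}$ of propositional variables; $\Delta\phi:=\neg\nabla\phi$, $\circ\phi:=\neg\bullet\phi$. Kripke models $\langle S,R,V\rangle$: $s\vDash\nabla\phi$ iff there are $t,u$ with $sRt$, $sRu$, $t\vDash\phi$, $u\nvDash\phi$; $s\vDash\bullet\phi$ iff $s\vDash\phi$ and there is $t$ with $sRt$, $t\nvDash\phi$. The Hilbert system $\mathbf{K}^{\nabla\bullet}$ has axioms: A0 all propositional tautologies; A1 $\bullet\phi\to\phi$; A2 $\nabla\phi\leftrightarrow\nabla\neg\phi$; A3 $\bullet(\psi\to\phi)\land\phi\to\bullet\phi$; A4 $\nabla(\phi\land\psi)\to\nabla\phi\vee\nabla\psi$; A5 $\bullet(\phi\land\psi)\to\bullet\phi\vee\bullet\psi$; A6 $\nabla\phi\to\bullet\phi\vee\bullet\neg\phi$; A7 $\bullet(\phi\to\psi)\land\bullet(\neg\phi\to\chi)\to\nabla\phi$; rules R1 $\phi/\Delta\phi$; R2 $\phi/\circ\phi$;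 R3 $\phi\leftrightarrow\psi/\Delta\phi\leftrightarrow\Delta\psi$; R4 $\phi\leftrightarrow\psi/\circ\phi\leftrightarrow\circ\psi$; MP. $\mathbf{T}^{\nabla\bullet}$ is $\mathbf{K}^{\nabla\bullet}$ plus the axiom schema AT: $\Delta\phi\land\phi\to\circ(\psi\to\phi)$. $\Gamma\vdash\phi$ means $\vdash(\gamma_1\land\dots\land\gamma_n)\to\phi$ for some finite subset of $\Gamma$. *)

(* Defs.v *)
From Stdlib Require Import List.
Import ListNotations.
Set Implicit Arguments.

Section Syntax.
Variable P : Type.

Inductive form : Type :=
| Var : P -> form
| Neg : form -> form
| And : form -> form -> form
| Nab : form -> form
| Bul : form -> form.

Definition Impl (a b : form) : form := Neg (And a (Neg b)).
Definition Or (a b : form) : form := Neg (And (Neg a) (Neg b)).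
Definition Iff (a b : form) : form := And (Impl a b) (Impl b a).
Definition Del (a : form) : form := Neg (Nab a).
Definition Circ (a : form) : form := Neg (Bul a).

(* Propositional truth value, treating variables and modal formulas as atoms. *)
Fixpoint tv (v : form -> bool) (a : form) : bool :=
  match a with
  | Neg b => negb (tv v b)
  | And b c => andb (tv v b) (tv v c)
  | _ => v a
  end.

Definition taut (a : form) : Prop := forall v : form -> bool, tv v a = true.

Inductive provT : form -> Prop :=
| A0 : forall a, taut a -> provT a
| A1 : forall a, provT (Impl (Bul a) a)
| A2 : forall a, provT (Iff (Nab a) (Nab (Neg a)))
| A3 : forall a b, provT (Impl (And (Bul (Impl b a)) a) (Bul a))
| A4 : forall a b, provT (Impl (Nab (And a b)) (Or (Nab a) (Nab b)))
| A5 : forall a b, provT (Impl (Bul (And a b)) (Or (Bul a) (Bul b)))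
| A6 : forall a, provT (Impl (Nab a) (Or (Bul a) (Bul (Neg a))))
| A7 : forall a b c,
    provT (Impl (And (Bul (Impl a b)) (Bul (Impl (Neg a) c))) (Nab a))
| AT : forall a b, provT (Impl (And (Del a) a) (Circ (Impl b a)))
| R1 : forall a, provT a -> provT (Del a)
| R2 : forall a, provT a -> provT (Circ a)
| R3 : forall a b, provT (Iff a b) -> provT (Iff (Del a) (Del b))
| R4 : forall a b, provT (Iff a b) -> provT (Iff (Circ a) (Circ b))
| MP : forall a b, provT (Impl a b) -> provT a -> provT b.

Definition bigAnd (g : form) (gs : list form) : form := fold_left And gs g.

(* Gamma |- phi : some finite subset of Gamma proves phi
   (the empty subset meaning |- phi). *)
Definition derivT (Gamma : form -> Prop) (a : form) : Prop :=
  provT a \/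
  exists g gs, Gamma g /\ (forall x, In x gs -> Gamma x) /\ provT (Impl (bigAnd g gs) a).

Fixpoint sat (S : Type) (R : S -> S -> Prop) (V : P -> S -> Prop) (s : S) (a : form)
  : Prop :=
  match a with
  | Var p => V p s
  | Neg b => ~ sat R V s b
  | And b c => sat R V s b /\ sat R V s c
  | Nab b => exists t u, R s t /\ R s u /\ sat R V t b /\ ~ sat R V u b
  | Bul b => sat R V s b /\ exists t, R s t /\ ~ sat R V t b
  end.

End Syntax.

(* Main.v *)
Require Import Defs.
From Stdlib Require Import List Classical ClassicalEpsilon.
From mathcomp Require classical_sets.
Import ListNotations.


Section Sound.
Variable P : Type.
Implicit Types a b c : form P.

Definition valid a := forall (S : Type) (R : S -> S -> Prop) (V : P -> S -> Prop),
  (forall x, R x x) -> forall s, sat R V s a.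

Lemma sat_Impl S (R : S -> S -> Prop) V s a b : sat R V s (Impl a b) <-> (sat R V s a -> sat R V s b).
Proof. unfold Impl; simpl. split; intros H; [intros Ha; apply NNPP; intros Hb; apply H; auto | intros [Ha Hb]; auto]. Qed.

Lemma sat_Or S (R : S -> S -> Prop) V s a b : sat R V s (Or a b) <-> (sat R V s a \/ sat R V s b).
Proof. unfold Or; simpl. split; intros H. apply NNPP; intros H'; apply H; split; intros Hx; apply H'; auto.
  intros [H1 H2]; destruct H; auto. Qed.

Lemma sat_Iff S (R : S -> S -> Prop) V s a b : sat R V s (Iff a b) <-> (sat R V s a <-> sat R V s b).
Proof. unfold Iff. cbn [sat]. rewrite !sat_Impl. tauto. Qed.

Lemma sat_tv S (R : S -> S -> Prop) V s a :
  tv (fun x => if excluded_middle_informative (sat R V s x) then true else false) a = true <-> sat R V s a.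
Proof.
  induction a; simpl;
  try (destruct excluded_middle_informative; split; intros; auto; discriminate).
  - rewrite <- IHa. destruct (tv _ a); simpl; intuition congruence.
  - rewrite <- IHa1, <- IHa2. destruct (tv _ a1), (tv _ a2); simpl; intuition congruence.
Qed.

Lemma soundness a : provT a -> valid a.
Proof.
  intros H; induction H; intros S R V Hr s.
  - apply sat_tv. apply H.
  - apply sat_Impl; simpl; tauto.
  - apply sat_Iff; simpl. split.
    + intros [t [u [H1 [H2 [H3 H4]]]]]. exists u, t. repeat split; auto.
    + intros [t [u [H1 [H2 [H3 H4]]]]]. exists u, t. repeat split; auto. apply NNPP; auto.
  - apply sat_Impl; simpl. intros [[H1 [t [Ht H2]]] H3]. split; auto.
    exists t; split; auto. intros Ha; apply H2. apply sat_Impl; auto.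
  - apply sat_Impl; intros [t [u [H1 [H2 [[H3 H4] H5]]]]]. apply sat_Or.
    apply NNPP; intros Hn. apply H5; split.
    + apply NNPP; intros Hn'; apply Hn; left. exists t, u; auto.
    + apply NNPP; intros Hn'; apply Hn; right. exists t, u; auto.
  - apply sat_Impl; intros [[H1 H2] [t [Ht H3]]]. apply sat_Or.
    apply NNPP; intros Hn. apply H3; split.
    + apply NNPP; intros Hn'; apply Hn; left. split; eauto.
    + apply NNPP; intros Hn'; apply Hn; right. split; eauto.
  - apply sat_Impl; intros [t [u [H1 [H2 [H3 H4]]]]]. apply sat_Or.
    destruct (classic (sat R V s a)) as [Hs|Hs].
    + left; split; eauto.
    + right; simpl; split; auto. exists t; split; auto.
  - apply sat_Impl; intros [[H1 [t [Ht H2]]] [H3 [u [Hu H4]]]].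
    rewrite sat_Impl in H2, H4. exists t, u. split; auto. split; auto. split.
    + apply NNPP; intros Hn; apply H2; intros; contradiction.
    + intros Hn; apply H4; intros Hn'; contradiction.
  - apply sat_Impl; intros [H1 H2]. simpl in H1. simpl. intros [H3 [t [Ht H4]]].
    apply H4. apply sat_Impl. intros _. apply NNPP; intros Hn. apply H1.
    exists s, t; auto.
  - simpl. intros [t [u [H1 [H2 [H3 H4]]]]]. apply H4. apply IHprovT; auto.
  - simpl. intros [H1 [t [Ht H2]]]. apply H2. apply IHprovT; auto.
  - apply sat_Iff. simpl.
    assert (E : forall x, sat R V x a <-> sat R V x b) by (intros; apply sat_Iff; apply IHprovT; auto).
    split; intros Hn [t [u [H1 [H2 [H3 H4]]]]]; apply Hn; exists t, u; repeat split; auto;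
      try (apply E; auto); intros Hc; apply H4; apply E; auto.
  - apply sat_Iff. simpl.
    assert (E : forall x, sat R V x a <-> sat R V x b) by (intros; apply sat_Iff; apply IHprovT; auto).
    split; intros Hn [H3 [t [H1 H4]]]; apply Hn; split; try (apply E; auto); exists t; split; auto;
      intros Hc; apply H4; apply E; auto.
  - apply (proj1 (sat_Impl _ _ _ _ _ _) (IHprovT1 S R V Hr s)). apply IHprovT2; auto.
Qed.
End Sound.
Set Implicit Arguments.

Section Syn.
Variable P : Type.
Variable p0 : P.
Implicit Types a b c : form P.

Lemma tvN v a : tv v (Neg a) = true <-> ~ tv v a = true.
Proof. simpl; destruct (tv v a); simpl; intuition congruence. Qed.
Lemma tvA v a b : tv v (And a b) = true <-> tv v a = true /\ tv v b = true.
Proof. simpl; destruct (tv v a), (tv v b); simpl; intuition congruence. Qed.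
Lemma tvI v a b : tv v (Impl a b) = true <-> (tv v a = true -> tv v b = true).
Proof. unfold Impl; simpl; destruct (tv v a), (tv v b); simpl; intuition congruence. Qed.
Lemma tvO v a b : tv v (Or a b) = true <-> (tv v a = true \/ tv v b = true).
Proof. unfold Or; simpl; destruct (tv v a), (tv v b); simpl; intuition congruence. Qed.

Definition imps (L : list (form P)) a := fold_right (@Impl P) a L.

Lemma tv_imps v L a : tv v (imps L a) = true <-> ((forall x, In x L -> tv v x = true) -> tv v a = true).
Proof.
  induction L as [|y L IHL].
  - simpl. intuition.
  - change (imps (y :: L) a) with (Impl y (imps L a)). rewrite tvI, IHL. split.
    + intros H H'. apply H; [apply H'; left; reflexivity| intros x Hx; apply H'; right; exact Hx].
    + intros H Hy HL. apply H. intros x [<-|Hx]; auto.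
Qed.

Lemma provL L b : provT (imps L b) -> (forall x, In x L -> provT x) -> provT b.
Proof.
  induction L as [|y L IHL]; intros H1 H2; auto.
  apply IHL; [eapply MP; [exact H1| apply H2; simpl; auto] | intros x Hx; apply H2; simpl; auto].
Qed.

Lemma lift L b : (forall v, (forall x, In x L -> tv v x = true) -> tv v b = true) ->
  (forall x, In x L -> provT x) -> provT b.
Proof.
  intros H1 H2. apply (provL L); auto. apply A0. intro v. apply tv_imps. apply H1.
Qed.

Fixpoint allT v (L : list (form P)) : Prop :=
  match L with [] => True | x :: L => tv v x = true /\ allT v L end.
Fixpoint allP (L : list (form P)) : Prop :=
  match L with [] => True | x :: L => provT x /\ allP L end.
Lemma allT_In v L : allT v L <-> forall x, In x L -> tv v x = true.
Proof. induction L; simpl; [intuition|]. rewrite IHL. split.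
  intros [H1 H2] x [<-|Hx]; auto. intros H; split; auto. Qed.
Lemma allP_In L : allP L -> forall x, In x L -> provT x.
Proof. induction L; simpl; [intuition|]. intros [H1 H2] x [<-|Hx]; auto. Qed.

Lemma lift' L b : (forall v, allT v L -> tv v b = true) -> allP L -> provT b.
Proof. intros H1 H2. apply (lift L). intros v Hv; apply H1, allT_In, Hv. apply allP_In; auto. Qed.

Definition Bx a := And a (Circ a).
Definition Bot : form P := And (Var p0) (Neg (Var p0)).
Definition Top : form P := Neg Bot.
Lemma tvBot v : tv v Bot = false.
Proof. simpl. destruct (v (Var p0)); reflexivity. Qed.

Ltac tvs := unfold Bx, Top, Del, Circ, Iff in *; repeat (rewrite ?tvN, ?tvA, ?tvI, ?tvO, ?tvBot in *); let Hft := fresh in assert (Hft : false <> true) by discriminate.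

Ltac lift_with L := apply (lift' L); [ let v := fresh "v" in let H := fresh "H" in
   intros v H; cbn [allT] in H;
   repeat match goal with H : _ /\ _ |- _ => destruct H end; tvs
   | simpl; repeat split; assumption ].

Lemma test a b : provT a -> provT (Impl a b) -> provT b.
Proof. intros H1 H2. lift_with [a; Impl a b]. tauto. Qed.


Lemma bul_eq a b : provT (Iff a b) -> provT (Impl (Bul a) (Bul b)).
Proof. intros H. pose proof (R4 H). lift_with [Iff (Circ a) (Circ b)]. tauto. Qed.

Lemma mono_bul a b : provT (Impl a b) -> provT (Impl (And a (Bul b)) (Bul a)).
Proof.
  intros H.
  assert (H1 : provT (Iff b (Impl (Impl b a) a))) by (lift_with [Impl a b]; tauto).
  pose proof (bul_eq H1) as H2.
  pose proof (A3 a (Impl b a)) as H3.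
  lift_with [Impl (Bul b) (Bul (Impl (Impl b a) a)); Impl (And (Bul (Impl (Impl b a) a)) a) (Bul a)].
  tauto.
Qed.

Lemma mono_B a b : provT (Impl a b) -> provT (Impl (Bx a) (Bx b)).
Proof. intros H. pose proof (mono_bul H). lift_with [Impl a b; Impl (And a (Bul b)) (Bul a)]. tauto. Qed.

Lemma conj_B a b : provT (Impl (Bx a) (Impl (Bx b) (Bx (And a b)))).
Proof. pose proof (A5 a b). lift_with [Impl (Bul (And a b)) (Or (Bul a) (Bul b))]. tauto. Qed.

Lemma nec_B a : provT a -> provT (Bx a).
Proof. intros H. pose proof (R2 H). lift_with [a; Circ a]. tauto. Qed.

Lemma K_B a b : provT (Impl (Bx (Impl a b)) (Impl (Bx a) (Bx b))).
Proof.
  assert (H : provT (Impl (And (Impl a b) a) b)) by (lift_with (@nil (form P)); tauto).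
  pose proof (mono_B H). pose proof (conj_B (Impl a b) a).
  lift_with [Impl (Bx (And (Impl a b) a)) (Bx b); Impl (Bx (Impl a b)) (Impl (Bx a) (Bx (And (Impl a b) a)))].
  tauto.
Qed.

Lemma imps_chain L b c : provT (imps L b) -> provT (Impl b c) -> provT (imps L c).
Proof. intros H1 H2. apply (lift' [imps L b; Impl b c]); [|simpl; tauto].
  intros v [Hb [Hc _]]. rewrite tv_imps in *. rewrite tvI in Hc. tauto. Qed.

Lemma box_list L a : provT (imps L a) -> provT (imps (map Bx L) (Bx a)).
Proof.
  revert a; induction L as [|y L IHL]; intros a H.
  - apply nec_B; exact H.
  - assert (H1 : provT (imps L (Impl y a))).
    { apply (lift' [imps (y::L) a]); [|simpl; tauto].
      intros v [Hv _]. rewrite tv_imps in *. rewrite tvI. intros HL Hy. apply Hv.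
      intros x [<-|Hx]; auto. }
    apply IHL in H1.
    pose proof (K_B y a).
    apply (lift' [imps (map Bx L) (Bx (Impl y a)); Impl (Bx (Impl y a)) (Impl (Bx y) (Bx a))]); [|simpl; tauto].
    intros v [Hv [HK _]]. change (imps (map Bx (y::L)) (Bx a)) with (Impl (Bx y) (imps (map Bx L) (Bx a))).
    rewrite tvI, tv_imps. rewrite tv_imps in Hv. rewrite !tvI in HK. tauto.
Qed.

Lemma P4 a : provT (Impl (Nab a) (Neg (Bx a))).
Proof. pose proof (A6 a). pose proof (A1 (Neg a)).
  lift_with [Impl (Nab a) (Or (Bul a) (Bul (Neg a))); Impl (Bul (Neg a)) (Neg a)]. tauto. Qed.

Lemma P5 a : provT (Impl (Nab a) (Neg (Bx (Neg a)))).
Proof. pose proof (A2 a). pose proof (P4 (Neg a)).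
  lift_with [Iff (Nab a) (Nab (Neg a)); Impl (Nab (Neg a)) (Neg (Bx (Neg a)))]. tauto. Qed.

Lemma bul_nab a : provT (Impl (And a (Bul a)) (Nab a)).
Proof.
  assert (H : provT (Iff a (Impl Top a))) by (lift_with (@nil (form P)); tauto).
  pose proof (bul_eq H). pose proof (AT a Top).
  lift_with [Impl (Bul a) (Bul (Impl Top a)); Impl (And (Del a) a) (Circ (Impl Top a))]. tauto.
Qed.

Lemma P6 a : provT (Impl (Neg (Bx a)) (Impl (Neg (Bx (Neg a))) (Nab a))).
Proof. pose proof (bul_nab a). pose proof (bul_nab (Neg a)). pose proof (A2 a).
  lift_with [Impl (And a (Bul a)) (Nab a); Impl (And (Neg a) (Bul (Neg a))) (Nab (Neg a));
     Iff (Nab a) (Nab (Neg a))]. tauto. Qed.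

Lemma P1 a : provT (Impl (Bul a) a).
Proof. apply A1. Qed.
Lemma P2 a : provT (Impl (Bul a) (Neg (Bx a))).
Proof. lift_with (@nil (form P)); tauto. Qed.
Lemma P3 a : provT (Impl a (Impl (Neg (Bul a)) (Bx a))).
Proof. lift_with (@nil (form P)); tauto. Qed.

End Syn.
Set Implicit Arguments.

Lemma zorn_sets (T : Type) (Q : (T -> Prop) -> Prop) :
  (forall F : (T -> Prop) -> Prop, (forall X, F X -> Q X) ->
     (forall X Y, F X -> F Y -> (forall t, X t -> Y t) \/ (forall t, Y t -> X t)) ->
     Q (fun t => exists2 X, F X & X t)) ->
  exists A, Q A /\ forall B, (forall t, A t -> B t) -> ~ (forall t, B t -> A t) -> ~ Q B.
Proof.
  intros H.
  destruct (@classical_sets.Zorn_bigcup T Q) as [A [HA HB]].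
  - intros F HF Ht. apply (H F HF Ht).
  - exists A. split; [exact HA|]. intros B H1 H2. apply HB. split; assumption.
Qed.

Section Canon.
Variable P : Type.
Variable p0 : P.
Implicit Types a b c : form P.
Implicit Types G M : form P -> Prop.

Definition cons G := forall L, (forall x, In x L -> G x) -> ~ provT (imps L (Bot p0)).
Definition mcs G := cons G /\ forall a, G a \/ G (Neg a).

Lemma cons_sub G M : (forall t, G t -> M t) -> cons M -> cons G.
Proof. intros H HM L HL. apply HM. intros; auto. Qed.

Lemma split_list (X : form P -> Prop) a L : (forall x, In x L -> X x \/ x = a) ->
  exists L0, (forall x, In x L0 -> X x) /\
    forall v, (forall x, In x L0 -> tv v x = true) -> tv v a = true -> forall x, In x L -> tv v x = true.
Proof.
  induction L as [|y L IHL]; intros H.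
  - exists []. split; simpl; tauto.
  - destruct IHL as [L0 [H1 H2]]. intros x Hx; apply H; simpl; auto.
    destruct (H y (or_introl eq_refl)) as [Hy|Hy].
    + exists (y :: L0). split.
      * intros x [<-|Hx]; auto.
      * intros v Hv Ha x [<-|Hx]. apply Hv; simpl; auto. apply H2; auto. intros; apply Hv; simpl; auto.
    + exists L0. split; auto. intros v Hv Ha x [<-|Hx]. subst; auto. apply H2; auto.
Qed.

Lemma incons_ext (X : form P -> Prop) a L : (forall x, In x L -> X x \/ x = a) ->
  provT (imps L (Bot p0)) -> exists L0, (forall x, In x L0 -> X x) /\ provT (imps L0 (Neg a)).
Proof.
  intros H1 H2. destruct (@split_list X a L H1) as [L0 [H3 H4]]. exists L0; split; auto.
  apply (lift' [imps L (Bot p0)]); [|simpl; tauto].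
  intros v [Hv _]. rewrite tv_imps in *. intros HL. rewrite tvN. intros Ha.
  assert (Hx : tv v (Bot p0) = true) by (apply Hv; apply H4; auto). rewrite tvBot in Hx; discriminate.
Qed.

Lemma mcs_closed G L a : mcs G -> (forall x, In x L -> G x) -> provT (imps L a) -> G a.
Proof.
  intros [Hc Hm] HL Hp. destruct (Hm a) as [|Hn]; auto. exfalso.
  apply (Hc (Neg a :: L)). intros x [<-|Hx]; auto.
  apply (lift' [imps L a]); [|simpl; tauto].
  intros v [Hv _]. change (imps (Neg a :: L) (Bot p0)) with (Impl (Neg a) (imps L (Bot p0))).
  rewrite tvI, tvN, !tv_imps in *. tauto.
Qed.

Lemma mcs_thm G a : mcs G -> provT a -> G a.
Proof. intros H Hp. apply (@mcs_closed G [] a); auto. simpl; tauto. Qed.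

Lemma mcs_mp G a b : mcs G -> G (Impl a b) -> G a -> G b.
Proof. intros H H1 H2. apply (@mcs_closed G [Impl a b; a] b); auto.
  intros x [<-|[<-|[]]]; auto.
  apply A0. intro v. rewrite !tv_imps. intros Hv. specialize (Hv (Impl a b)) as Hab.
  rewrite tvI in Hab. apply Hab; simpl; auto. apply Hv; simpl; auto. Qed.

Lemma mcs_neg G a : mcs G -> (G (Neg a) <-> ~ G a).
Proof.
  intros [Hc Hm]. split.
  - intros H1 H2. apply (Hc [a; Neg a]). intros x [<-|[<-|[]]]; auto.
    apply A0. intro v. rewrite tv_imps. intros Hv. rewrite tvBot.
    pose proof (Hv a) as Ha. pose proof (Hv (Neg a)) as Hna. rewrite tvN in Hna.
    exfalso. apply Hna; simpl; auto. apply Ha; simpl; auto.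
  - destruct (Hm a); tauto.
Qed.

Lemma mcs_mp2 G a b c : mcs G -> G (Impl a (Impl b c)) -> G a -> G b -> G c.
Proof. intros H H1 H2 H3. eapply mcs_mp; eauto. eapply mcs_mp; eauto. Qed.

Lemma lindenbaum G : cons G -> exists M, mcs M /\ forall x, G x -> M x.
Proof.
  intros HG.
  destruct (@zorn_sets (form P) (fun X => cons (fun t => G t \/ X t))) as [A [HA Hmax]].
  - intros F HF Hch L HL Hp.
    assert (Hfin : (forall x, In x L -> G x) \/ exists2 X, F X & forall x, In x L -> G x \/ X x).
    { clear Hp. induction L as [|y L IHL].
      - left; simpl; tauto.
      - destruct IHL as [IH|[X FX IH]]. intros; apply HL; simpl; auto.
        + destruct (HL y (or_introl eq_refl)) as [Hy|[Y FY Hy]].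
          * left. intros x [<-|Hx]; auto.
          * right. exists Y; auto. intros x [<-|Hx]; auto.
        + destruct (HL y (or_introl eq_refl)) as [Hy|[Y FY Hy]].
          * right. exists X; auto. intros x [<-|Hx]; auto.
          * destruct (Hch X Y FX FY) as [HXY|HYX].
            -- right. exists Y; auto. intros x [<-|Hx]; auto. destruct (IH x Hx); auto.
            -- right. exists X; auto. intros x [<-|Hx]; auto. }
    destruct Hfin as [Hf|[X FX Hf]].
    + apply (HG L); auto.
    + apply (HF X FX L); auto.
  - exists (fun t => G t \/ A t). split; [split|].
    + exact HA.
    + intros a. apply NNPP; intros Hn.
      assert (Hinc : forall b, ~ (G b \/ A b) -> exists L0, (forall x, In x L0 -> G x \/ A x) /\ provT (imps L0 (Neg b))).
      { intros b Hb.
        assert (Hnc : ~ cons (fun t => G t \/ (A t \/ t = b))).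
        { apply (Hmax (fun t => A t \/ t = b)). intros; auto. intros H. apply Hb. right. apply H. right; reflexivity. }
        unfold cons in Hnc. apply not_all_ex_not in Hnc. destruct Hnc as [L HL].
        apply imply_to_and in HL. destruct HL as [HL Hp]. apply NNPP in Hp.
        apply (@incons_ext (fun t => G t \/ A t) b L); auto.
        intros x Hx. destruct (HL x Hx) as [|[|]]; auto. }
      destruct (Hinc a) as [L1 [H1 H1']]. intros H; apply Hn; left; auto.
      destruct (Hinc (Neg a)) as [L2 [H2 H2']]. intros H; apply Hn; right; auto.
      apply (HA (L1 ++ L2)). intros x Hx; apply in_app_or in Hx; destruct Hx; auto.
      apply (lift' [imps L1 (Neg a); imps L2 (Neg (Neg a))]); [|simpl; tauto].
      intros v [Ha [Hb _]]. rewrite tv_imps in *. intros HL.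
      assert (E1 : tv v (Neg a) = true) by (apply Ha; intros; apply HL, in_or_app; auto).
      assert (E2 : tv v (Neg (Neg a)) = true) by (apply Hb; intros; apply HL, in_or_app; auto).
      rewrite tvN in E2. contradiction.
    + intros; auto.
Qed.

End Canon.
Set Implicit Arguments.

Section Truth.
Variable P : Type.
Variable p0 : P.
Implicit Types a b c : form P.
Implicit Types G M : form P -> Prop.

Lemma mcs_and G a b : mcs p0 G -> (G (And a b) <-> G a /\ G b).
Proof.
  intros H. split.
  - intros Hab. split.
    + apply (@mcs_closed _ p0 G [And a b] a); auto. intros x [<-|[]]; auto.
      apply A0; intro v; rewrite tv_imps; intros Hv. specialize (Hv (And a b) (or_introl eq_refl)).
      rewrite tvA in Hv; tauto.
    + apply (@mcs_closed _ p0 G [And a b] b); auto. intros x [<-|[]]; auto.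
      apply A0; intro v; rewrite tv_imps; intros Hv. specialize (Hv (And a b) (or_introl eq_refl)).
      rewrite tvA in Hv; tauto.
  - intros [Ha Hb]. apply (@mcs_closed _ p0 G [a; b] (And a b)); auto. intros x [<-|[<-|[]]]; auto.
    apply A0; intro v; rewrite tv_imps; intros Hv. rewrite tvA. split; apply Hv; simpl; auto.
Qed.

Lemma exist_lem G a : mcs p0 G -> G (Neg (Bx a)) ->
  exists D, mcs p0 D /\ (forall b, G (Bx b) -> D b) /\ D (Neg a).
Proof.
  intros HG Hn.
  destruct (@lindenbaum _ p0 (fun t => G (Bx t) \/ t = Neg a)) as [M [HM Hsub]].
  - intros L HL Hp.
    destruct (@incons_ext _ p0 (fun t => G (Bx t)) (Neg a) L HL Hp) as [L0 [H0 Hp0]].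
    assert (Hnn : provT (Impl (Neg (Neg a)) a)) by (apply A0; intro v; rewrite tvI, !tvN; tauto).
    pose proof (imps_chain L0 Hp0 Hnn) as Hp1.
    apply box_list in Hp1.
    assert (HB : G (Bx a)).
    { apply (@mcs_closed _ p0 G (map (@Bx P) L0) (Bx a)); auto.
      intros x Hx. apply in_map_iff in Hx. destruct Hx as [y [<- Hy]]. auto. }
    apply (proj1 (mcs_neg _ HG) Hn HB).
  - exists M. split; [exact HM|]. split; [intros b Hb; apply Hsub; left; exact Hb | apply Hsub; right; reflexivity].
Qed.

Definition CS := {G : form P -> Prop | mcs p0 G}.
Definition CR (s t : CS) := forall a, proj1_sig s (Bx a) -> proj1_sig t a.
Definition CV (p : P) (s : CS) := proj1_sig s (Var p).

Lemma CR_refl s : CR s s.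
Proof. intros a H. destruct s as [G HG]; simpl in *.
  apply (mcs_mp (Bx a) _ HG); auto. apply (mcs_thm HG). apply A0; intro v.
  unfold Bx. rewrite tvI, tvA. tauto. Qed.

Lemma truth a : forall s : CS, sat CR CV s a <-> proj1_sig s a.
Proof.
  induction a as [p|a IHa|a1 IH1 a2 IH2|a IHa|a IHa]; intros [G HG].
  - unfold CV; simpl; tauto.
  - change (sat CR CV (exist _ G HG) (Neg a)) with (~ sat CR CV (exist _ G HG) a).
    rewrite IHa. simpl. rewrite (mcs_neg _ HG). tauto.
  - change (sat CR CV (exist _ G HG) (And a1 a2)) with
      (sat CR CV (exist _ G HG) a1 /\ sat CR CV (exist _ G HG) a2).
    rewrite IH1, IH2. simpl. rewrite (mcs_and _ _ HG). tauto.
  - change (sat CR CV (exist _ G HG) (Nab a)) with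
      (exists t u, CR (exist _ G HG) t /\ CR (exist _ G HG) u /\ sat CR CV t a /\ ~ sat CR CV u a).
    simpl. split.
    + intros [t [u [Rt [Ru [Ht Hu]]]]]. rewrite IHa in Ht, Hu.
      destruct (proj2 HG (Bx a)) as [HB|HnB].
      { exfalso; apply Hu; apply Ru; exact HB. }
      destruct (proj2 HG (Bx (Neg a))) as [HB'|HnB'].
      { exfalso. apply Rt in HB'. destruct t as [T HT]. simpl in *.
        apply (proj1 (mcs_neg _ HT) HB' Ht). }
      apply (mcs_mp2 (Neg (Bx a)) (Neg (Bx (Neg a))) _ HG); auto. apply (mcs_thm HG). first [apply (P6 p0) | apply P6].
    + intros HN.
      assert (H1 : G (Neg (Bx a))) by (apply (mcs_mp (Nab a) _ HG); auto; apply (mcs_thm HG); first [apply (P4 p0) | apply P4]).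
      assert (H2 : G (Neg (Bx (Neg a)))) by (apply (mcs_mp (Nab a) _ HG); auto; apply (mcs_thm HG); first [apply (P5 p0) | apply P5]).
      destruct (@exist_lem G a HG H1) as [D1 [HD1 [R1 N1]]].
      destruct (@exist_lem G (Neg a) HG H2) as [D2 [HD2 [R2 N2]]].
      exists (exist _ D2 HD2), (exist _ D1 HD1). split; [exact R2|]. split; [exact R1|].
      rewrite !IHa. simpl. rewrite (mcs_neg _ HD1) in N1. rewrite (mcs_neg _ HD2), (mcs_neg _ HD2) in N2.
      split; [apply NNPP; exact N2 | exact N1].
  - change (sat CR CV (exist _ G HG) (Bul a)) with
      (sat CR CV (exist _ G HG) a /\ exists t, CR (exist _ G HG) t /\ ~ sat CR CV t a).
    rewrite IHa. simpl. split.
    + intros [Ha [t [Rt Ht]]]. rewrite IHa in Ht.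
      destruct (proj2 HG (Bul a)) as [|Hn]; auto. exfalso. apply Ht. apply Rt. simpl.
      apply (mcs_mp2 a (Neg (Bul a)) _ HG); auto. apply (mcs_thm HG). first [apply (P3 p0) | apply P3].
    + intros HB.
      assert (Ha : G a) by (apply (mcs_mp (Bul a) _ HG); auto; apply (mcs_thm HG); first [apply (P1 p0) | apply P1]).
      assert (H1 : G (Neg (Bx a))) by (apply (mcs_mp (Bul a) _ HG); auto; apply (mcs_thm HG); first [apply (P2 p0) | apply P2]).
      destruct (@exist_lem G a HG H1) as [D1 [HD1 [R1 N1]]].
      split; auto. exists (exist _ D1 HD1). split; [exact R1|]. rewrite IHa. simpl.
      rewrite (mcs_neg _ HD1) in N1. exact N1.
Qed.

End Truth.
Set Implicit Arguments.

Lemma tv_bigAnd P v (g : form P) gs : tv v (bigAnd g gs) = true <-> tv v g = true /\ forall x, In x gs -> tv v x = true.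
Proof.
  revert g; induction gs as [|y gs IH]; intros g.
  - simpl. intuition.
  - change (bigAnd g (y :: gs)) with (bigAnd (And g y) gs). rewrite IH, tvA. split.
    + intros [[H1 H2] H3]. split; auto. intros x [<-|Hx]; auto.
    + intros [H1 H2]. split; [split|]; auto. apply H2; simpl; auto. intros; apply H2; simpl; auto.
Qed.

Lemma sat_bigAnd P S (R : S -> S -> Prop) (V : P -> S -> Prop) s (g : form P) gs :
  sat R V s (bigAnd g gs) <-> sat R V s g /\ forall x, In x gs -> sat R V s x.
Proof.
  revert g; induction gs as [|y gs IH]; intros g.
  - simpl. intuition.
  - change (bigAnd g (y :: gs)) with (bigAnd (And g y) gs). rewrite IH. simpl. split.
    + intros [[H1 H2] H3]. split; auto. intros x [<-|Hx]; auto.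
    + intros [H1 H2]. split; [split|]; auto.
Qed.

Theorem theorem4 (P : Type) (p0 : P) (Gamma : form P -> Prop) (phi : form P) :
  derivT Gamma phi <->
  (forall (S : Type) (R : S -> S -> Prop) (V : P -> S -> Prop),
     (forall x, R x x) ->
     forall s : S, (forall psi, Gamma psi -> sat R V s psi) -> sat R V s phi).
Proof.
  split.
  - intros [H|[g [gs [Hg [Hgs H]]]]] S R V Hr s HG.
    + apply (@soundness P phi H); auto.
    + pose proof (@soundness P _ H S R V Hr s) as Hs. rewrite sat_Impl in Hs. apply Hs.
      apply sat_bigAnd. split; auto.
  - intros H. apply NNPP. intros Hn.
    destruct (@lindenbaum _ p0 (fun t => Gamma t \/ t = Neg phi)) as [M [HM Hsub]].
    + intros L HL Hp.
      destruct (@incons_ext _ p0 Gamma (Neg phi) L HL Hp) as [L0 [H0 Hp0]].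
      assert (Hnn : provT (Impl (Neg (Neg phi)) phi)) by (apply A0; intro v; rewrite tvI, !tvN; tauto).
      pose proof (imps_chain L0 Hp0 Hnn) as Hp1.
      apply Hn. destruct L0 as [|g gs].
      * left. exact Hp1.
      * right. exists g, gs. split; [apply H0; simpl; auto|]. split; [intros; apply H0; simpl; auto|].
        apply (lift' [imps (g :: gs) phi]); [|simpl; tauto].
        intros v [Hv _]. rewrite tvI, tv_bigAnd. rewrite tv_imps in Hv.
        intros [H1 H2]. apply Hv. intros x [<-|Hx]; auto.
    + pose (s := exist (fun G => mcs p0 G) M HM : CS p0).
      assert (Hs : sat (@CR P p0) (@CV P p0) s phi).
      { apply H. apply CR_refl. intros psi Hpsi. apply truth. simpl. apply Hsub; auto. }
      apply truth in Hs. simpl in Hs.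
      assert (Hneg : M (Neg phi)) by (apply Hsub; auto).
      apply (proj1 (mcs_neg _ HM) Hneg Hs).
Qed.
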